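(* Let $\mathsf{X}$ be a finite connected graph with no tails and with $l$ ramified vertices, and suppose $\mathsf{X}$ has a segment decomposition with segments $\mathsf{S}^1,\dots,\mathsf{S}^k$ (arranged so that $\mathsf{S}^1,\dots,\mathsf{S}^{k'}$ are 2-segments and $\mathsf{S}^{k'+1},\dots,\mathsf{S}^k$ are 1-segments); let $t_i$ be the number of ramified vertices of $\mathsf{S}^i$. Let $\mathsf{X}_n$ be the $n$-th layer of the corresponding $\mathbb{Z}_p$-tower with trivial voltage assignment, and assume all ramified vertices are totally ramified. Then \[\kappa(\mathsf{X}_n)=\kappa(\mathsf{X})\cdot p^{n(l-1)}\prod_{i=1}^k F_{t_i}(\mathsf{S}^i)^{p^n-1}.\]
   Context: Graphs are finite and undirected, possibly with multiple edges and loops; $\kappa(\cdot)$ denotes the number of spanning trees. Ramified/unramified vertices, tails, admissible paths and segment decompositions: a tail is an unramified vertex with exactly one neighbour joined to it by exactly one edge; for ramified $v,v'$ an admissible path is a path from $v$ to $v'$ with all intermediate vertices unramified (closed if $v=v'$). Colour each admissible path between distinct ramified vertices so that paths sharing an edge receive the same colour; a decomposition exists only if each colour class joins a single pair of ramified vertices, and each class is a 2-segment. Every remaining edge lies on an admissible closed path at one ramified vertex through unramified vertices outside the 2-segments; colouring these likewise (sharing an edge forces the same colour, no coloured edge reused) gives the 1-segments. Segments are edge-disjoint, share no unramified vertex and cover $\mathsf{X}$. For a graph $\mathsf{S}$ with $t\in\{1,2\}$ marked (ramified) vertices, $F_t(\mathsf{S})$ is the number of spanning forests of $\mathsf{S}$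 with $t$ trees each containing exactly one marked vertex ($F_1=\kappa$). $\mathbb{Z}_p$-towers: $\Gamma\cong\mathbb{Z}_p$ (multiplicative), $\Gamma_n=\Gamma/\Gamma^{p^n}$, $\pi_n:\Gamma\to\Gamma_n$. A voltage assignment is $\alpha$ from directed edges to $\Gamma$ with $\alpha(\bar e)=\alpha(e)^{-1}$; trivial means $\alpha\equiv 1$. Each vertex $v$ has a closed subgroup $I_v\subseteq\Gamma$; $v$ is ramified iff $I_v\neq 1$, totally ramified iff $I_v=\Gamma$. The layer $\mathsf{X}_n$ has vertices $\bigsqcup_v\{v\}\times\Gamma_n/\pi_n(I_v)$ and directed edges $\mathbf{E}(\mathsf{X})\times\Gamma_n$, where $(e,g)$ goes from $(o(e),g\pi_n(I_{o(e)}))$ to $(t(e),g\pi_n(\alpha(e))\pi_n(I_{t(e)}))$ and $\overline{(e,g)}=(\bar e,g\pi_n(\alpha(e)))$; all $\mathsf{X}_n$ are assumed connected. *)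

(* Defs.v *)
From HB Require Import structures.
From mathcomp Require Import all_boot all_order all_algebra.
Set Implicit Arguments.
Unset Strict Implicit.
Unset Printing Implicit Defensive.
Import GRing.Theory.

(* A finite graph (multiple edges and loops allowed) in Serre's style:
   a finite vertex type, a finite type of directed edges (darts), the origin
   map o and the inversion e |-> ebar.
   An undirected edge is an orbit {e, ebar}. *)
Record graph := Graph {
  vtx : finType;
  drt : finType;
  org : drt -> vtx;
  rev : drt -> drt }.
Arguments org {g}.
Arguments rev {g}.

Definition is_graph (G : graph) : Prop :=
  involutive (@rev G) /\ forall d : drt G, rev d != d.

Definition tgt (G : graph) (d : drt G) : vtx G := org (rev d).

(* sets of undirected edges are represented by inversion-closed sets of darts *)
Definition rev_closed (G : graph) (F : {set drt G}) : bool :=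
  [forall d in F, rev d \in F].

Definition adj (G : graph) (F : {set drt G}) : rel (vtx G) :=
  fun x y => [exists d in F, (org d == x) && (tgt d == y)].

Definition connectedb (G : graph) (F : {set drt G}) : bool :=
  [forall x, [forall y, connect (adj F) x y]].

(* F is (the edge set of) a forest: acyclic, i.e. no edge of F lies on a
   cycle of F, i.e. removing any edge of F disconnects its endpoints
   (in particular F contains no loop). *)
Definition forest (G : graph) (F : {set drt G}) : bool :=
  rev_closed F &&
  [forall d in F, ~~ connect (adj (F :\: [set d; rev d])) (org d) (tgt d)].

Definition spanning_tree (G : graph) (T : {set drt G}) : bool :=
  forest T && connectedb T.

Definition kappa (G : graph) : nat := #|[set T : {set drt G} | spanning_tree T]|.

Definition verts (G : graph) (S : {set drt G}) : {set vtx G} :=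
  [set org d | d in S].

Definition rooted_forest (G : graph) (S : {set drt G}) (M : {set vtx G})
    (F : {set drt G}) : bool :=
  [&& F \subset S, forest F,
      [forall x in verts S, [exists m in M, connect (adj F) x m]]
    & [forall m in M, [forall m' in M, connect (adj F) m m' ==> (m == m')]]].

(* F_t(S) with t = #|M| *)
Definition Fcount (G : graph) (S : {set drt G}) (M : {set vtx G}) : nat :=
  #|[set F : {set drt G} | rooted_forest S M F]|.

Definition nbrs (G : graph) (v : vtx G) : {set vtx G} :=
  [set tgt d | d in [set d : drt G | org d == v]].

Definition tail (G : graph) (R : {set vtx G}) (v : vtx G) : bool :=
  [&& v \notin R, #|nbrs v| == 1 &
      [forall u in nbrs v, #|[set d : drt G | (org d == v) && (tgt d == u)]| == 1]].

Definition seg_ram (G : graph) (R : {set vtx G}) (S : {set drt G}) : {set vtx G} :=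
  verts S :&: R.

(* two darts of S are linked if they are inverse to each other or leave the
   same unramified vertex (i.e. are consecutive on a path through an
   unramified vertex) *)
Definition link (G : graph) (R : {set vtx G}) (S : {set drt G}) : rel (drt G) :=
  fun d d' => [&& d \in S, d' \in S &
                  (d' == rev d) || ((org d == org d') && (org d \notin R))].

(* A segment decomposition of G (w.r.t. the ramified set R) with segments
   S 0, ..., S (k-1) given by their edge sets. *)
Definition segment_decomposition (G : graph) (R : {set vtx G}) (k : nat)
    (S : 'I_k -> {set drt G}) : Prop :=
  [/\ forall i, rev_closed (S i) && (S i != set0),
      forall i j, i != j -> [disjoint S i & S j],
      forall d : drt G, (exists i, d \in S i) &
      forall i j (v : vtx G), i != j -> v \notin R -> v \in verts (S i) ->
         v \notin verts (S j)] /\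
  (forall i, {in S i &, forall d d', connect (link R (S i)) d d'}) /\
  (forall i, (#|seg_ram R (S i)| == 1) || (#|seg_ram R (S i)| == 2)).

(* Gamma_n = Gamma / Gamma^{p^n} ~ Z/p^nZ, written additively *)
Definition Gam (p n : nat) := 'I_((p ^ n).-1.+1).

Definition coset (p n : nat) (H : {set Gam p n}) (g : Gam p n) : {set Gam p n} :=
  [set h : Gam p n | (h - g)%R \in H].

(* vertices of X_n: pairs (v, g pi_n(I_v)), H v standing for pi_n(I_v) *)
Definition lvtx (G : graph) (p n : nat) (H : vtx G -> {set Gam p n}) :=
  {x : vtx G * {set Gam p n} | [exists g, x.2 == coset (H x.1) g]}.

Lemma coset_ex (G : graph) (p n : nat) (H : vtx G -> {set Gam p n})
  (v : vtx G) (g : Gam p n) :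
  [exists g', (v, coset (H v) g).2 == coset (H (v, coset (H v) g).1) g'].
Proof. by apply/existsP; exists g. Qed.

Definition lorg (G : graph) (p n : nat) (H : vtx G -> {set Gam p n})
  (d : drt G * Gam p n) : lvtx H :=
  exist _ (org d.1, coset (H (org d.1)) d.2) (coset_ex H (org d.1) d.2).

Definition lrev (G : graph) (p n : nat) (alpha : drt G -> Gam p n)
  (d : drt G * Gam p n) : drt G * Gam p n :=
  (rev d.1, (d.2 + alpha d.1)%R).

(* The n-th layer X_n for a voltage assignment alpha (already projected to
   Gamma_n: alpha = pi_n o alpha) and H v = pi_n(I_v):
   directed edges E(X) x Gamma_n, (e,g) from (o e, g H(o e)),
   inverse (ebar, g alpha(e)). *)
Definition layer (G : graph) (p n : nat) (alpha : drt G -> Gam p n)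
  (H : vtx G -> {set Gam p n}) : graph :=
  @Graph (lvtx H) (drt G * Gam p n)%type (@lorg G p n H) (@lrev G p n alpha).

(* the layer of the Z_p-tower with trivial voltage assignment in which every
   ramified vertex (those in R) is totally ramified (I_v = Gamma, so
   pi_n(I_v) = Gamma_n) and the others are unramified (I_v = 1) *)
Definition trivial_layer (G : graph) (R : {set vtx G}) (p n : nat) : graph :=
  layer (fun _ : drt G => 0%R : Gam p n)
        (fun v => if v \in R then [set: Gam p n] else [set 0%R]).

(* Main.v *)
Require Import Defs.
From mathcomp Require Import all_boot all_order all_algebra.
From Stdlib Require Import FunctionalExtensionality.
Set Implicit Arguments.
Unset Strict Implicit.
Unset Printing Implicit Defensive.

Section Basic.
Variable G : graph.
Hypothesis Hinv : involutive (@Defs.rev G).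
Implicit Types (F : {set drt G}) (x y : vtx G) (d : drt G).

Lemma adjP F x y :
  reflect (exists2 d, d \in F & (org d = x /\ tgt d = y)) (adj F x y).
Proof.
apply: (iffP existsP) => [[d /andP[dF /andP[/eqP<- /eqP<-]]]|[d dF [<- <-]]].
  by exists d.
by exists d; rewrite dF !eqxx.
Qed.

Lemma adj_sub F F' : F \subset F' -> subrel (adj F) (adj F').
Proof.
move=> sub x y /adjP[d dF [<- <-]]; apply/adjP; exists d => //.
exact: (subsetP sub).
Qed.

Lemma connect_adj_sub F F' : F \subset F' ->
  subrel (connect (adj F)) (connect (adj F')).
Proof.
by move=> sub; apply: connect_sub => x y /(adj_sub sub); apply: connect1.
Qed.

Lemma rev_closedP F : reflect (forall d, d \in F -> Defs.rev d \in F) (rev_closed F).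
Proof.
apply: (iffP forallP) => [H d dF|H d]; first by have := H d; rewrite dF.
by apply/implyP => /H.
Qed.

Lemma tgt_rev d : tgt (Defs.rev d) = org d.
Proof. by rewrite /tgt Hinv. Qed.

Lemma adj_sym F : rev_closed F -> symmetric (adj F).
Proof.
move=> /rev_closedP rc x y; apply/idP/idP => /adjP[d dF [<- <-]];
  by apply/adjP; exists (Defs.rev d); [apply: rc| rewrite tgt_rev].
Qed.

Lemma connect_symF F : rev_closed F -> connect_sym (adj F).
Proof. by move=> rc; apply: sym_connect_sym; apply: adj_sym. Qed.

Lemma forest_sub F F' : rev_closed F' -> F' \subset F -> forest F -> forest F'.
Proof.
move=> rc sub /andP[_ /forallP fF]; rewrite /forest rc /=.
apply/forallP => d; apply/implyP => dF'.
have := fF d; rewrite (subsetP sub _ dF') /=; apply: contra.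
by apply: connect_adj_sub; apply: setSD.
Qed.

Lemma forestP F : forest F ->
  forall d, d \in F -> ~~ connect (adj (F :\: [set d; Defs.rev d])) (org d) (tgt d).
Proof. by move=> /andP[_ /forallP H] d dF; have := H d; rewrite dF. Qed.

Lemma rev_closedD F d : rev_closed F -> rev_closed (F :\: [set d; Defs.rev d]).
Proof.
move=> /rev_closedP rc; apply/rev_closedP => e; rewrite !inE !negb_or.
case/andP => /andP[ne1 ne2] eF; rewrite rc // andbT; apply/andP; split.
  by apply: contra ne2 => /eqP<-; rewrite Hinv.
by apply: contra ne1 => /eqP/(congr1 Defs.rev); rewrite !Hinv => ->.
Qed.

Lemma rev_closedI F F' : rev_closed F -> rev_closed F' -> rev_closed (F :&: F').
Proof.
move=> /rev_closedP r1 /rev_closedP r2; apply/rev_closedP => e.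
by rewrite !inE => /andP[/r1 -> /r2 ->].
Qed.

Lemma Lfirst F x y : connect (adj F) x y -> x != y ->
  exists2 d, d \in F & (org d = x /\ connect (adj (F :\: [set d; Defs.rev d])) (tgt d) y).
Proof.
move=> /connectP[p pth ->]; case/shortenP: pth => p' pth' up _ {p}.
case: p' pth' up => [|z q] /=; first by rewrite eqxx.
case/andP => /adjP[d dF [od td]] pq /andP[xq uq] _.
exists d => //; split => //; apply/connectP; exists q; last by rewrite td.
rewrite td; apply: (@sub_in_path _ (predC1 x) (adj F)) => //.
  move=> a b; rewrite !inE => ax bx /adjP[e eF [oe te]].
  apply/adjP; exists e => //; rewrite !inE eF andbT negb_or.
  apply/andP; split; apply/eqP => ee.
    by move: ax; rewrite -oe ee od eqxx.
  by move: bx; rewrite -te ee tgt_rev od eqxx.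
rewrite /=; apply/andP; split.
  by apply: contra xq => /eqP->; rewrite inE eqxx.
apply/allP => w wq; rewrite !inE; apply: contra xq => /eqP <-.
by rewrite inE wq orbT.
Qed.

End Basic.

Section SegDefs.
Variable G : graph.
Variable R : {set vtx G}.
Variable I : finType.
Variable S : I -> {set drt G}.

Definition hubs i := seg_ram R (S i).
Definition okseg i (U : {set drt G}) :=
  forest U && [forall x in verts (S i), [exists h in hubs i, connect (adj U) x h]].
Definition conn i (U : {set drt G}) :=
  [exists h in hubs i, [exists h' in hubs i, (h != h') && connect (adj U) h h']].
Definition adjM (C : {set I}) : rel (vtx G) :=
  fun x y => [exists i in C, (x \in hubs i) && (y \in hubs i)].
Definition MST (C : {set I}) :=
  [&& C \subset [set i | #|hubs i| == 2],
      [forall x in R, [forall y in R, connect (adjM C) x y]] &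
      [forall i in C, [forall h in hubs i, [forall h' in hubs i,
          (h != h') ==> ~~ connect (adjM (C :\ i)) h h']]]].
Definition CT (T : {set drt G}) := [set i | conn i (T :&: S i)].
End SegDefs.

Section Seg.
Variable G : graph.
Hypothesis Hinv : involutive (@Defs.rev G).
Variable R : {set vtx G}.
Variable I : finType.
Variable S : I -> {set drt G}.
Hypothesis Hrc : forall i, rev_closed (S i).
Hypothesis Hcover : forall d, exists i, d \in S i.
Hypothesis Hdisj : forall i j d, d \in S i -> d \in S j -> i = j.
Hypothesis Hpriv : forall i d, org d \notin R -> org d \in verts (S i) -> d \in S i.
Hypothesis Hhub : forall i, 0 < #|hubs R S i| <= 2.
Hypothesis Hcov : forall v, v \notin R -> exists i, v \in verts (S i).

Local Notation hubsS := (hubs R S).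
Local Notation okS := (okseg R S).
Local Notation connS := (conn R S).
Local Notation adjMS := (adjM R S).
Local Notation MSTS := (MST R S).
Local Notation CTS := (CT R S).

Lemma in_verts (A : {set drt G}) d : d \in A -> org d \in verts A.
Proof. by move=> dA; apply: imset_f. Qed.

Lemma tgt_verts (A : {set drt G}) d : rev_closed A -> d \in A -> tgt d \in verts A.
Proof. by move=> /rev_closedP rc dA; apply: in_verts; apply: rc. Qed.

Lemma hubsE i x : (x \in hubsS i) = (x \in verts (S i)) && (x \in R).
Proof. by rewrite /hubs /seg_ram inE. Qed.

Lemma hubs2 i a h1 h2 : a \in hubsS i -> h1 \in hubsS i -> h2 \in hubsS i ->
  h1 != h2 -> a = h1 \/ a = h2.
Proof.
move=> ai h1i h2i ne.
case: (eqVneq a h1) => [->|a1]; first by left.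
case: (eqVneq a h2) => [->|a2]; first by right.
have : #|[set a; h1; h2]| <= #|hubsS i|.
  apply: subset_leq_card; apply/subsetP => z; rewrite !inE.
  by move=> /orP[/orP[]|] /eqP->; rewrite -hubsE.
rewrite -setUA cardsU1 cards2 !inE negb_or a1 a2 ne /=.
move=> H3; case/andP: (Hhub i) => _ H2; by have := leq_trans H3 H2.
Qed.

Lemma conn_all i U : rev_closed U -> connS i U ->
  forall a b, a \in hubsS i -> b \in hubsS i -> connect (adj U) a b.
Proof.
move=> rc /existsP[h /andP[hi /existsP[h' /andP[h'i /andP[ne c]]]]] a b ai bi.
have sym := connect_symF Hinv rc.
case: (hubs2 ai hi h'i ne) => ->; case: (hubs2 bi hi h'i ne) => ->;
  first [by rewrite connect0 | by [] | by rewrite sym].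
Qed.

Lemma conn_card i U : connS i U -> #|hubsS i| == 2.
Proof.
move=> /existsP[h /andP[hi /existsP[h' /andP[h'i /andP[ne c]]]]].
rewrite eqn_leq; case/andP: (Hhub i) => _ -> /=.
have <- : #|[set h; h']| = 2 by rewrite cards2 ne.
by apply: subset_leq_card; apply/subsetP => z; rewrite !inE => /orP[]/eqP->;
  rewrite -hubsE.
Qed.

Lemma proj1 T i x y : x \notin R -> x \in verts (S i) -> connect (adj T) x y ->
  connect (adj (T :&: S i)) x y \/
  exists2 h, h \in hubsS i & connect (adj (T :&: S i)) x h.
Proof.
move=> xR xS /connectP[p pth ->]; elim: p x xR xS pth => [|z p IH] x xR xS /=.
  by left.
case/andP => /adjP[d dT [od td]] pth.
have dS : d \in S i by apply: Hpriv; rewrite od.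
have a1 : adj (T :&: S i) x z by apply/adjP; exists d; rewrite ?inE ?dT.
have zS : z \in verts (S i) by rewrite -td; apply: tgt_verts.
case: (boolP (z \in R)) => zR.
  right; exists z; first by rewrite hubsE zS zR.
  exact: connect1.
case: (IH z zR zS pth) => [c|[h hh c]].
  by left; apply: connect_trans (connect1 a1) c.
by right; exists h => //; apply: connect_trans (connect1 a1) c.
Qed.

Lemma projM_aux T h p x : h \in R ->
  (x = h \/ exists i, [/\ x \notin R, h \in hubsS i,
      connect (adj (T :&: S i)) h x & x \in verts (S i)]) ->
  path (adj T) x p -> last x p \in R -> connect (adjMS (CTS T)) h (last x p).
Proof.
elim: p x h => [|z p IH] x h hR inv /=.
  move=> _ xR; case: inv => [->|[i [xR' _ _ _]]]; first exact: connect0.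
  by rewrite xR in xR'.
case/andP => /adjP[d dT [od td]] pth lR.
have [j [dS hj cj]] : exists j, [/\ d \in S j, h \in hubsS j &
    connect (adj (T :&: S j)) h x].
  case: inv => [xh|[i [xR hi ci xi]]].
    have [j dj] := Hcover d; exists j; split => //.
      by rewrite hubsE -xh -od in_verts //= od xh.
    by rewrite xh connect0.
  by exists i; split => //; apply: Hpriv; rewrite od.
have a1 : adj (T :&: S j) x z by apply/adjP; exists d; rewrite ?inE ?dT.
have cz : connect (adj (T :&: S j)) h z := connect_trans cj (connect1 a1).
have zS : z \in verts (S j) by rewrite -td; apply: tgt_verts.
case: (boolP (z \in R)) => zR.
  have IH' := IH z z zR (or_introl erefl) pth lR.
  case: (eqVneq h z) IH' => [<-|hz IH'] //.
  apply: connect_trans _ IH'; apply: connect1; apply/existsP; exists j.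
  rewrite hj hubsE zS zR inE /= andbT /conn.
    apply/existsP; exists h; rewrite hj; apply/existsP; exists z.
  by rewrite hubsE zS zR hz.
by apply: IH pth lR => //; right; exists j; split.
Qed.

Lemma projM T h y : h \in R -> y \in R -> connect (adj T) h y ->
  connect (adjMS (CTS T)) h y.
Proof.
move=> hR yR /connectP[p pth yE]; rewrite yE; apply: projM_aux => //.
  by left.
by rewrite -yE.
Qed.

Lemma liftM (C : {set I}) (T : {set drt G}) a b :
  (forall j, j \in C -> forall u v, u \in hubsS j -> v \in hubsS j ->
     connect (adj T) u v) ->
  connect (adjMS C) a b -> connect (adj T) a b.
Proof.
move=> H; apply: connect_sub => x y /existsP[j /andP[jC /andP[xj yj]]].
exact: (H j jC x y xj yj).
Qed.

Lemma adjM_mono (C C' : {set I}) : C \subset C' ->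
  subrel (connect (adjMS C)) (connect (adjMS C')).
Proof.
move=> sub; apply: connect_sub => x y /existsP[j /andP[jC xy]].
by apply: connect1; apply/existsP; exists j; rewrite (subsetP sub _ jC).
Qed.

End Seg.

Section Char.
Variable G : graph.
Hypothesis Hinv : involutive (@Defs.rev G).
Variable R : {set vtx G}.
Variable I : finType.
Variable S : I -> {set drt G}.
Hypothesis Hrc : forall i, rev_closed (S i).
Hypothesis Hcover : forall d, exists i, d \in S i.
Hypothesis Hdisj : forall i j d, d \in S i -> d \in S j -> i = j.
Hypothesis Hpriv : forall i d, org d \notin R -> org d \in verts (S i) -> d \in S i.
Hypothesis Hhub : forall i, 0 < #|hubs R S i| <= 2.
Hypothesis Hcov : forall v, v \notin R -> exists i, v \in verts (S i).

Local Notation hubsS := (hubs R S).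
Local Notation okS := (okseg R S).
Local Notation connS := (conn R S).
Local Notation adjMS := (adjM R S).
Local Notation MSTS := (MST R S).
Local Notation CTS := (CT R S).

Lemma ST_ok T i : spanning_tree T -> okS i (T :&: S i).
Proof.
case/andP => fT /forallP cT.
have rcT : rev_closed T := (andP fT).1.
rewrite /okseg (forest_sub (rev_closedI rcT (Hrc i)) (subsetIl _ _) fT) /=.
apply/forallP => x; apply/implyP => xS; apply/existsP.
case: (boolP (x \in R)) => xR.
  by exists x; rewrite (hubsE R S) xS xR connect0.
have [h0 h0i] : exists h0, h0 \in hubsS i.
  by apply/set0Pn; rewrite -card_gt0; case/andP: (Hhub i).
have := forallP (cT x) h0.
case/(proj1 Hrc Hpriv xR xS) => [c|[h hi c]]; [exists h0 | exists h]; by rewrite ?h0i ?hi c.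
Qed.

Lemma ST_MST T : spanning_tree T -> MSTS (CTS T).
Proof.
case/andP => fT /forallP cT.
have rcT : rev_closed T := (andP fT).1.
apply/and3P; split.
- by apply/subsetP => i; rewrite !inE; apply: (conn_card Hhub).
- apply/forallP => x; apply/implyP => xR; apply/forallP => y; apply/implyP => yR.
  apply: (projM Hrc Hcover Hpriv) => //; exact: (forallP (cT x) y).
apply/forallP => i; apply/implyP => iC; apply/forallP => h; apply/implyP => hi.
apply/forallP => h'; apply/implyP => h'i; apply/implyP => ne; apply/negP => cM.
have ci : connS i (T :&: S i) by move: iC; rewrite inE.
have rci := rev_closedI rcT (Hrc i).
have chh : connect (adj (T :&: S i)) h h' := conn_all Hinv Hhub rci ci hi h'i.
have cout : connect (adj (T :\: S i)) h h'.
  apply: (liftM (C := CTS T :\ i)) cM => j; rewrite !inE => /andP[ji cj] u v uj vj.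
  have := conn_all Hinv Hhub (rev_closedI rcT (Hrc j)) cj uj vj; apply: connect_adj_sub.
  apply/subsetP => e; rewrite !inE => /andP[eT eS]; rewrite eT andbT.
  by apply/negP => eSi; rewrite (Hdisj eSi eS) eqxx in ji.
have [d dTi [od c2]] := Lfirst Hinv chh ne.
have /setIP[dT dS] := dTi.
have := forestP fT dT; apply/negP/negPn.
rewrite (connect_symF Hinv (rev_closedD Hinv _ rcT)).
apply: connect_trans (connect_adj_sub _ c2) _.
  by apply: setSD; apply: subsetIl.
rewrite od (connect_symF Hinv (rev_closedD Hinv _ rcT)).
apply: connect_adj_sub cout; apply/subsetP => e; rewrite !inE => /andP[eS eT].
rewrite eT andbT negb_or; apply/andP; split; apply: contra eS => /eqP->//.
exact: (rev_closedP _ (Hrc i)).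
Qed.

Lemma MST_ST T : (forall i, okS i (T :&: S i)) -> MSTS (CTS T) -> spanning_tree T.
Proof.
move=> okT /and3P[_ /forallP MC /forallP MA].
have rcT : rev_closed T.
  apply/rev_closedP => d dT; have [i di] := Hcover d.
  have /andP[/andP[rci _] _] := okT i.
  have : d \in T :&: S i by rewrite inE dT di.
  by move/(rev_closedP _ rci); rewrite inE => /andP[].
have toHub : forall x, exists2 h, h \in R & connect (adj T) x h.
  move=> x; case: (boolP (x \in R)) => xR; first by exists x.
  have [i xi] := Hcov xR.
  have /andP[_ /forallP H] := okT i.
  have /existsP[h /andP[hi c]] := implyP (H x) xi.
  exists h; first by rewrite (hubsE R S) in hi; case/andP: hi.
  by apply: connect_adj_sub c; apply: subsetIl.
have liftT : forall a b, a \in R -> b \in R -> connect (adj T) a b.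
  move=> a b aR bR; apply: (liftM (C := CTS T)).
    move=> j; rewrite inE => cj u v uj vj.
    apply: (connect_adj_sub (subsetIl T (S j))).
    exact: (conn_all Hinv Hhub (rev_closedI rcT (Hrc j)) cj uj vj).
  by move: (MC a); rewrite aR /= => /forallP/(_ b)/implyP; apply.
have symT := connect_symF Hinv rcT.
apply/andP; split; last first.
  apply/forallP => x; apply/forallP => y.
  have [hx hxR cx] := toHub x; have [hy hyR cy] := toHub y.
  apply: connect_trans cx _; apply: connect_trans (liftT _ _ hxR hyR) _.
  by rewrite symT.
rewrite /forest rcT /=; apply/forallP => d; apply/implyP => dT.
have [i di] := Hcover d.
set T' := T :\: [set d; Defs.rev d].
have rcT' : rev_closed T' := rev_closedD Hinv d rcT.
have dTi : d \in T :&: S i by rewrite inE dT di.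
have /andP[fTi _] := okT i.
have nci := forestP fTi dTi.
have eqTi : T' :&: S i = (T :&: S i) :\: [set d; Defs.rev d] by rewrite setIDAC.
apply/negP => cxy.
have xS : org d \in verts (S i) := in_verts di.
have yS : tgt d \in verts (S i) := tgt_verts (Hrc i) di.
have noHub : forall z w, z \in verts (S i) -> connect (adj T') z w ->
    ~~ connect (adj (T' :&: S i)) z w ->
    exists2 h, h \in hubsS i & connect (adj (T' :&: S i)) z h.
  move=> z w zS czw nc; case: (boolP (z \in R)) => zR.
    by exists z; rewrite ?(hubsE R S) ?zS ?zR ?connect0.
  by case: (proj1 Hrc Hpriv zR zS czw) => // c; rewrite c in nc.
rewrite -eqTi in nci.
have [h hi ch] := noHub _ _ xS cxy nci.
have rcTi' := rev_closedI rcT' (Hrc i).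
have symTi' := connect_symF Hinv rcTi'.
have [h' h'i ch'] : exists2 h', h' \in hubsS i & connect (adj (T' :&: S i)) (tgt d) h'.
  apply: (noHub _ (org d) yS); first by rewrite (connect_symF Hinv rcT').
  by rewrite symTi'.
have hx : connect (adj (T' :&: S i)) h (org d) by rewrite symTi'.
case: (eqVneq h h') => [eh|ne].
  apply: (negP nci); apply: connect_trans ch _; by rewrite symTi' eh.
have sub : T' :&: S i \subset T :&: S i by apply: setSI; apply: subsetDl.
have Ci : i \in CTS T.
  rewrite inE; apply/existsP; exists h; rewrite hi; apply/existsP; exists h'.
  rewrite h'i ne /=.
  have c1 : connect (adj (T :&: S i)) h (org d) := connect_adj_sub sub hx.
  have c2 : adj (T :&: S i) (org d) (tgt d) by apply/adjP; exists d.
  have c3 : connect (adj (T :&: S i)) (tgt d) h' := connect_adj_sub sub ch'.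
  exact: connect_trans (connect_trans c1 (connect1 c2)) c3.
have hR : h \in R by rewrite (hubsE R S) in hi; case/andP: hi.
have h'R : h' \in R by rewrite (hubsE R S) in h'i; case/andP: h'i.
have subT : T' :&: S i \subset T' by apply: subsetIl.
have cM : connect (adjMS (CTS T')) h h'.
  apply: (projM Hrc Hcover Hpriv) => //.
  apply: connect_trans (connect_adj_sub subT hx) _.
  exact: connect_trans cxy (connect_adj_sub subT ch').
have subC : CTS T' \subset CTS T :\ i.
  apply/subsetP => j; rewrite !inE => cj.
  case: (eqVneq j i) => [ji|ji] /=.
    rewrite ji in cj.
    have chh := conn_all Hinv Hhub rcTi' cj hi h'i.
    case/negP: nci; apply: connect_trans ch _.
    by rewrite symTi'; apply: connect_trans ch' _; rewrite symTi'.
  have -> : T :&: S j = T' :&: S j; last by [].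
  apply/setP => e; rewrite !inE; case: (boolP (e \in S j)) => eSj;
    rewrite ?andbF ?andbT //.
  have ed : e != d.
    by apply: contra ji => /eqP ed0; rewrite ed0 in eSj; rewrite (Hdisj eSj di).
  have erd : e != Defs.rev d.
    apply: contra ji => /eqP ed0; rewrite ed0 in eSj.
    by rewrite (Hdisj eSj (rev_closedP _ (Hrc i) _ di)).
  by rewrite (negbTE ed) (negbTE erd).
move: (MA i); rewrite Ci /= => /forallP/(_ h); rewrite hi /= => /forallP/(_ h').
by rewrite h'i ne /= (adjM_mono subC cM).
Qed.

Lemma ST_char T : spanning_tree T = [forall i, okS i (T :&: S i)] && MSTS (CTS T).
Proof.
apply/idP/andP => [H|[/forallP H1 H2]]; last exact: MST_ST.
by split; [apply/forallP => i; apply: ST_ok | apply: ST_MST].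
Qed.

End Char.

Lemma prod_bool (I : finType) (b : I -> bool) :
  \prod_i (b i : nat) = [forall i, b i] :> nat.
Proof.
case: (boolP [forall i, b i]) => [/forallP H|/forallPn[i /negbTE bi]].
  by rewrite big1 // => i _; rewrite H.
by rewrite (bigD1 i) //= bi.
Qed.

Lemma prod_cond0 (I : finType) (P : I -> bool) (a : I -> nat) :
  \prod_i (if P i then a i else 0) = if [forall i, P i] then \prod_i a i else 0.
Proof.
case: (boolP [forall i, P i]) => [/forallP H|/forallPn[i /negbTE bi]].
  by apply: eq_bigr => i _; rewrite H.
by rewrite (bigD1 i) //= bi.
Qed.

Lemma card_set_sum (T : finType) (P : pred T) :
  #|[set x | P x]| = \sum_x (P x : nat).
Proof.
rewrite -sum1_card big_mkcond /=; apply: eq_bigr => x _; rewrite inE.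
by case: (P x).
Qed.

Lemma sum_prod_partition (D I : finType) (S : I -> {set D})
    (f : I -> {set D} -> nat) :
  (forall d, exists i, d \in S i) -> (forall i j d, d \in S i -> d \in S j -> i = j) ->
  \sum_(T : {set D}) \prod_i f i (T :&: S i) =
  \prod_i \sum_(U : {set D} | U \subset S i) f i U.
Proof.
move=> Hcov Hdisj.
rewrite (eq_bigr (fun i => \sum_(U : {set D}) if U \subset S i then f i U else 0));
  last by move=> i _; rewrite big_mkcond.
rewrite bigA_distr_bigA /=.
rewrite (eq_bigr (fun g : {ffun I -> {set D}} =>
   if [forall i, g i \subset S i] then \prod_i f i (g i) else 0));
  last by move=> g _; rewrite prod_cond0.
rewrite -big_mkcond /=.
pose h (T : {set D}) : {ffun I -> {set D}} := [ffun i => T :&: S i].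
pose h' (g : {ffun I -> {set D}}) : {set D} := \bigcup_i g i.
rewrite (reindex_onto h h') /=; last first.
  move=> g /forallP Hg; apply/ffunP => i; rewrite ffunE; apply/setP => d.
  rewrite inE; apply/andP/idP => [[/bigcupP[j _ dj] di]|di].
    by rewrite -(Hdisj _ _ _ (subsetP (Hg j) _ dj) di).
  by split; [apply/bigcupP; exists i | apply: (subsetP (Hg i))].
apply: eq_big => [T|T _]; last by apply: eq_bigr => i _; rewrite ffunE.
have -> : h' (h T) = T.
  apply/setP => d; apply/bigcupP/idP => [[i _]|dT]; first by rewrite ffunE inE => /andP[].
  by have [i di] := Hcov d; exists i => //; rewrite ffunE inE dT di.
rewrite eqxx andbT; apply/esym/forallP => i; rewrite ffunE; exact: subsetIr.
Qed.

Section Count.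
Variable G : graph.
Hypothesis Hinv : involutive (@Defs.rev G).
Variable R : {set vtx G}.
Variable I : finType.
Variable S : I -> {set drt G}.
Hypothesis Hrc : forall i, rev_closed (S i).
Hypothesis Hcover : forall d, exists i, d \in S i.
Hypothesis Hdisj : forall i j d, d \in S i -> d \in S j -> i = j.
Hypothesis Hpriv : forall i d, org d \notin R -> org d \in verts (S i) -> d \in S i.
Hypothesis Hhub : forall i, 0 < #|hubs R S i| <= 2.
Hypothesis Hcov : forall v, v \notin R -> exists i, v \in verts (S i).

Definition wseg i (b : bool) :=
  #|[set U : {set drt G} | (U \subset S i) && okseg R S i U && (conn R S i U == b)]|.

Lemma kappa_formula :
  kappa G = \sum_(C : {set I}) MST R S C * \prod_i wseg i (i \in C).
Proof.
rewrite /kappa card_set_sum.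
rewrite (eq_bigr (fun T => \sum_(C : {set I}) MST R S C *
    \prod_i (okseg R S i (T :&: S i) && (conn R S i (T :&: S i) == (i \in C)) : nat)));
  last first.
  move=> T _; rewrite (ST_char Hinv Hrc Hcover Hdisj Hpriv Hhub Hcov).
  rewrite (bigD1 (CT R S T)) //= [X in _ + X]big1 ?addn0; last first.
    move=> C neC; rewrite prod_bool.
    case: (boolP [forall i, _]) => [/forallP H|]; last by rewrite muln0.
    case/eqP: neC; apply/setP => i; rewrite inE.
    by have /andP[_ /eqP] := H i.
  rewrite prod_bool.
  have -> : [forall i, okseg R S i (T :&: S i) &&
      (conn R S i (T :&: S i) == (i \in CT R S T))] =
      [forall i, okseg R S i (T :&: S i)].
    by apply: eq_forallb => i; rewrite inE eqxx andbT.
  by case: [forall _, _]; case: (MST _ _ _).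
rewrite exchange_big /=; apply: eq_bigr => C _.
rewrite -big_distrr /=; congr (_ * _).
rewrite (sum_prod_partition
  (fun i U => (okseg R S i U && (conn R S i U == (i \in C)) : nat)) Hcover Hdisj).
apply: eq_bigr => i _; rewrite /wseg card_set_sum big_mkcond /=.
by apply: eq_bigr => U _; case: (U \subset S i).
Qed.

End Count.

Section MGDefs.
Variables (V J : finType) (R : {set V}) (ends : J -> {set V}).
Definition adjMg (C : {set J}) : rel V :=
  fun x y => [exists j in C, (x \in ends j) && (y \in ends j)].
Definition acyc (C : {set J}) :=
  [forall i in C, [forall h in ends i, [forall h' in ends i,
          (h != h') ==> ~~ connect (adjMg (C :\ i)) h h']]].
Definition MSTg (C : {set J}) :=
  [&& C \subset [set i | #|ends i| == 2],
      [forall x in R, [forall y in R, connect (adjMg C) x y]] & acyc C].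
End MGDefs.

Lemma MST_MSTg (G : graph) (R : {set vtx G}) (I : finType) (S : I -> {set drt G}) C :
  MST R S C = MSTg R (hubs R S) C.
Proof. by []. Qed.

Section TreeCount.
Variables (V J : finType) (R : {set V}) (ends : J -> {set V}).
Hypothesis Hends : forall j, ends j \subset R.

Local Notation adjC := (adjMg ends).
Implicit Types (C : {set J}).

Lemma adjMg_sym C : symmetric (adjC C).
Proof.
move=> x y; apply/existsP/existsP => [][j /andP[jC /andP[a b]]];
  by exists j; rewrite jC a b.
Qed.

Lemma cM_sym C : connect_sym (adjC C).
Proof. exact/sym_connect_sym/adjMg_sym. Qed.

Lemma adjMg_mono (C C' : {set J}) : C \subset C' -> subrel (connect (adjC C)) (connect (adjC C')).
Proof.
move=> sub; apply: connect_sub => x y /existsP[j /andP[jC xy]].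
by apply: connect1; apply/existsP; exists j; rewrite (subsetP sub _ jC).
Qed.

Lemma acyc_sub (C C' : {set J}) : C' \subset C -> acyc ends C -> acyc ends C'.
Proof.
move=> sub /forallP H; apply/forallP => i; apply/implyP => iC'.
have := H i; rewrite (subsetP sub _ iC') /= => /forallP H1.
apply/forallP => h; apply/implyP => hi; have := H1 h; rewrite hi /= => /forallP H2.
apply/forallP => h'; apply/implyP => h'i; have := H2 h'; rewrite h'i /=.
move=> /implyP H3; apply/implyP => ne; apply: contra (H3 ne).
by apply: adjMg_mono; apply: setSD.
Qed.

Lemma connect_empty x y : connect (adjC set0) x y = (x == y).
Proof.
apply/idP/eqP => [/connectP[[|z p] /=]|->]; last exact: connect0.
  by move=> _ ->.
by case/andP => /existsP[j]; rewrite inE.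
Qed.

Section Merge.
Variables (C : {set J}) (j : J) (u v : V).
Hypothesis jC : j \in C.
Hypothesis ej : ends j = [set u; v].
Local Notation c' := (connect (adjC (C :\ j))).
Hypothesis nuv : ~~ c' u v.

Lemma adjC_split x y : adjC C x y -> adjC (C :\ j) x y \/ (x \in [set u; v] /\ y \in [set u; v]).
Proof.
case/existsP => i /andP[iC xy]; case: (eqVneq i j) => [eij|nij].
  by right; rewrite -ej -eij; case/andP: xy.
by left; apply/existsP; exists i; rewrite !inE nij iC.
Qed.

Lemma merge x y : connect (adjC C) x y =
  [|| c' x y, c' x u && c' v y | c' x v && c' u y].
Proof.
have cuv : connect (adjC C) u v.
  by apply: connect1; apply/existsP; exists j; rewrite jC ej !inE !eqxx orbT.
have sub : C :\ j \subset C by apply: subsetDl.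
have symC := cM_sym C; have sym' := cM_sym (C :\ j).
apply/idP/idP; last first.
  case/or3P => [c|/andP[c1 c2]|/andP[c1 c2]]; first exact: adjMg_mono c.
    exact: connect_trans (adjMg_mono sub c1) (connect_trans cuv (adjMg_mono sub c2)).
  apply: connect_trans (adjMg_mono sub c1) _.
  by apply: connect_trans _ (adjMg_mono sub c2); rewrite symC.
move=> /connectP[p pth ->] {y}; elim: p x pth => [|z p IH] x /=.
  by rewrite connect0.
case/andP => /adjC_split [a|[xuv zuv]] /IH.
  have cxz : c' x z := connect1 a.
  case/or3P => [c|/andP[c1 c2]|/andP[c1 c2]].
  - by rewrite (connect_trans cxz c).
  - by rewrite (connect_trans cxz c1) c2 orbT.
  - by rewrite (connect_trans cxz c1) c2 !orbT.
set y := last z p.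
have Q : forall a, a \in [set u; v] ->
    [|| c' a y, c' a u && c' v y | c' a v && c' u y] = c' u y || c' v y.
  move=> a; rewrite !inE => /orP[]/eqP->; rewrite connect0 /=.
    by case: (c' u y); case: (c' v y); rewrite ?andbF ?orbF ?orbT.
  by case: (c' u y); case: (c' v y); rewrite ?andbF ?orbF ?orbT.
by rewrite (Q z zuv) (Q x xuv).
Qed.

Local Notation cl' x := [set y in R | c' x y].
Local Notation U := (cl' u :|: cl' v).

Lemma cl_merge x : x \in R ->
  [set y in R | connect (adjC C) x y] = if x \in U then U else cl' x.
Proof.
move=> xR; have sym' := cM_sym (C :\ j).
apply/setP => y; rewrite !inE merge.
case: ifP; rewrite !inE xR /=.
  case/orP => c.
    rewrite (sym' u x) in c.
    have E : forall w, c' x w = c' u w.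
      have c2 : c' u x by rewrite sym'.
    move=> w; apply/idP/idP => cw; [exact: connect_trans c2 cw | exact: connect_trans c cw].
    rewrite !E connect0 /=.
    by case: (y \in R); case: (c' u y); case: (c' v y); case: (c' u v).
  rewrite (sym' v x) in c.
  have E : forall w, c' x w = c' v w.
    have c2 : c' v x by rewrite sym'.
  move=> w; apply/idP/idP => cw; [exact: connect_trans c2 cw | exact: connect_trans c cw].
  rewrite !E connect0 /=.
  by case: (y \in R); case: (c' u y); case: (c' v y); case: (c' v u).
move/negbT; rewrite negb_or => /andP[nu nv].
rewrite sym' in nu; rewrite sym' in nv; rewrite (negbTE nu) (negbTE nv) /=.
by rewrite !orbF.
Qed.

Lemma cl_self x : x \in R -> x \in cl' x.
Proof. by move=> xR; rewrite inE xR connect0. Qed.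

Lemma ncomp_merge :
  #|[set [set y in R | connect (adjC C) x y] | x in R]| + 1 =
  #|[set cl' x | x in R]|.
Proof.
have sym' := cM_sym (C :\ j).
have uR : u \in R by apply: (subsetP (Hends j)); rewrite ej !inE eqxx.
have vR : v \in R by apply: (subsetP (Hends j)); rewrite ej !inE eqxx orbT.
pose A := [set cl' x | x in R :\: U].
have notA : forall W : {set V}, (u \in W) || (v \in W) -> W \notin A.
  move=> W uvW; apply/imsetP => [[x /setDP[xR xU] eW]].
  move: uvW xU; rewrite eW !inE xR uR vR /= => /orP[] c; rewrite sym' in c; by rewrite c ?orbT.
have clU : forall x, x \in R -> x \in U -> cl' x = cl' u \/ cl' x = cl' v.
  move=> x xR; rewrite !inE => /orP[] /andP[_ c]; [left|right];
    apply/setP => y; rewrite !inE; congr (_ && _); apply/idP/idP => cy.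
  - by apply: connect_trans c cy.
  - by rewrite sym' in c; apply: connect_trans c cy.
  - by apply: connect_trans c cy.
  - by rewrite sym' in c; apply: connect_trans c cy.
have E1 : [set [set y in R | connect (adjC C) x y] | x in R] = U |: A.
  apply/setP => W; rewrite !inE; apply/imsetP/orP.
    case=> x xR ->; rewrite cl_merge //; case: ifP => xU; first by left.
    by right; apply/imsetP; exists x; rewrite // inE xU xR.
  case=> [/eqP->|/imsetP[x /setDP[xR xU] ->]].
    by exists u => //; rewrite cl_merge // !inE uR connect0.
  by exists x => //; rewrite cl_merge // (negbTE xU).
have E2 : [set cl' x | x in R] = cl' u |: (cl' v |: A).
  apply/setP => W; rewrite !inE; apply/imsetP/idP.
    case=> x xR ->; case: (boolP (x \in U)) => xU.
      by case: (clU x xR xU) => ->; rewrite eqxx ?orbT.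
    by apply/orP; right; apply/orP; right; apply/imsetP; exists x; rewrite // inE xU xR.
  case/orP => [/eqP->|/orP[/eqP->|/imsetP[x /setDP[xR xU] ->]]].
  - by exists u.
  - by exists v.
  - by exists x.
rewrite E1 E2 !cardsU1 (notA U) ?inE ?uR ?connect0 //.
have nu : cl' u \notin A by apply: notA; rewrite inE uR connect0.
have nv : cl' v \notin A by apply: notA; rewrite !inE vR connect0 !orbT.
have ne : cl' u != cl' v.
  apply/eqP => e; have : u \in cl' v by rewrite -e inE uR connect0.
  by rewrite inE uR /= sym' (negbTE nuv).
rewrite negb_or ne nu nv /=.
by rewrite add1n addn1.
Qed.

End Merge.

Lemma acyc_count n C : #|C| = n -> C \subset [set i | #|ends i| == 2] ->
  acyc ends C ->
  #|[set [set y in R | connect (adjC C) x y] | x in R]| + #|C| = #|R|.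
Proof.
elim: n C => [|n IH] C cC sub ac.
  have -> : C = set0 by apply: cards0_eq.
  rewrite cards0 addn0.
  have -> : [set [set y in R | connect (adjC set0) x y] | x in R] = [set [set x] | x in R].
    apply: eq_in_imset => x xR; apply/setP => y.
    by rewrite !inE connect_empty eq_sym; case: (eqVneq y x) => [->|ne]; by rewrite ?xR ?andbF.
  by rewrite card_in_imset //; move=> x y _ _; apply: set1_inj.
have [j jC] : exists j, j \in C by apply/set0Pn; rewrite -card_gt0 cC.
have cC' : #|C :\ j| = n by move: cC; rewrite (cardsD1 j C) jC add1n => -[].
have sub' : C :\ j \subset [set i | #|ends i| == 2].
  by apply: subset_trans sub; apply: subsetDl.
have ac' := acyc_sub (subsetDl C [set j]) ac.
have /cards2P[u [v [uv ej]]] : #|ends j| == 2 by have := subsetP sub j jC; rewrite inE.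
have nuv : ~~ connect (adjC (C :\ j)) u v.
  move/forallP: ac => /(_ j); rewrite jC /= => /forallP/(_ u).
  have uj : u \in ends j by rewrite ej !inE eqxx.
  have vj : v \in ends j by rewrite ej !inE eqxx orbT.
  by rewrite uj /= => /forallP/(_ v); rewrite vj uv.
have H1 := ncomp_merge jC ej nuv; have H2 := IH _ cC' sub' ac'.
by rewrite cC -H2 -H1 cC' -addnA add1n.
Qed.

Lemma MSTg_card C : MSTg R ends C -> #|C| = #|R| - 1.
Proof.
case/and3P => sub /forallP conn ac.
have := acyc_count (erefl _) sub ac.
case: (set_0Vmem R) => [R0|[x0 x0R]].
  have -> : C = set0.
    apply/setP => j; rewrite inE; apply/negP => jC.
    have := subsetP sub j jC; rewrite inE.
    have -> : ends j = set0 by apply/eqP; rewrite -subset0 -R0.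
    by rewrite cards0.
  by move=> _; rewrite cards0 R0 cards0.
have -> : [set [set y in R | connect (adjC C) x y] | x in R] = [set R].
  apply/setP => W; rewrite inE; apply/imsetP/eqP => [[x xR ->]|->].
    apply/setP => y; rewrite inE; case: (boolP (y \in R)) => //= yR.
    by have := conn x; rewrite xR /= => /forallP/(_ y); rewrite yR.
  exists x0 => //; apply/setP => y; rewrite inE; case: (boolP (y \in R)) => //= yR.
  by have := conn x0; rewrite x0R /= => /forallP/(_ y); rewrite yR.
by rewrite cards1 => <-; rewrite add1n subn1.
Qed.

End TreeCount.

Lemma forall_imset (A B : finType) (f : A -> B) (D : {set A}) (P : B -> bool) :
  [forall x in f @: D, P x] = [forall x in D, P (f x)].
Proof.
apply/forallP/forallP => H x.
  by apply/implyP => xD; have := H (f x); rewrite imset_f.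
apply/implyP => /imsetP[y yD ->]; by have := H y; rewrite yD.
Qed.

Lemma connect_inj (A B : finType) (f : A -> B) (e : rel A) (e' : rel B) :
  injective f ->
  (forall x y', e' (f x) y' -> exists y, y' = f y) ->
  (forall x y, e' (f x) (f y) = e x y) ->
  forall x y, connect e' (f x) (f y) = connect e x y.
Proof.
move=> Hinj Hcod He x y; apply/idP/idP.
  move=> /connectP[p pth eq]; elim: p x pth eq => [|z p IH] x /=.
    by move=> _ /Hinj ->; apply: connect0.
  case/andP => a pth eq; have [z0 ez] := Hcod _ _ a; subst z.
  rewrite He in a; exact: connect_trans (connect1 a) (IH z0 pth eq).
move=> /connectP[p pth ->]; elim: p x pth => [|z p IH] x /=.
  by move=> _; apply: connect0.
case/andP => a pth; apply: connect_trans (IH z pth).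
by apply: connect1; rewrite He.
Qed.

Section Transport.
Variables (V V' J : finType) (phi : V -> V') (R : {set V}) (ends : J -> {set V}).
Hypothesis Hinj : injective phi.

Local Notation ends' := (fun j => phi @: ends j).

Lemma adjMg_inj C x y : adjMg ends' C (phi x) (phi y) = adjMg ends C x y.
Proof. by apply: eq_existsb => j; rewrite !mem_imset. Qed.

Lemma cMg_inj C x y :
  connect (adjMg ends' C) (phi x) (phi y) = connect (adjMg ends C) x y.
Proof.
apply: (connect_inj Hinj) => [a y' /existsP[j /andP[_ /andP[_ /imsetP[z _ ->]]]]|a b].
  by exists z.
exact: adjMg_inj.
Qed.

Lemma MSTg_inj C : MSTg (phi @: R) ends' C = MSTg R ends C.
Proof.
rewrite /MSTg /acyc; congr [&& _, _ & _].
- have -> : [set i | #|phi @: ends i| == 2] = [set i | #|ends i| == 2] => //.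
  by apply/setP => j; rewrite !inE card_imset.
- rewrite forall_imset; apply: eq_forallb => x; congr (_ ==> _).
  rewrite forall_imset; apply: eq_forallb => y; congr (_ ==> _).
  exact: cMg_inj.
apply: eq_forallb => i; congr (_ ==> _).
rewrite forall_imset; apply: eq_forallb => h; congr (_ ==> _).
rewrite forall_imset; apply: eq_forallb => h'; congr (_ ==> _).
by rewrite (inj_eq Hinj) cMg_inj.
Qed.
End Transport.

Section Blowup.
Variables (V J K : finType) (R : {set V}) (ends : J -> {set V}).
Local Notation ends2 := (fun jg : J * K => ends jg.1).

Lemma adjMg_blow (C : {set J * K}) x y :
  adjMg ends2 C x y = adjMg ends [set jg.1 | jg in C] x y.
Proof.
apply/existsP/existsP => [[jg /andP[jgC xy]]|[j /andP[/imsetP[jg jgC ->] xy]]].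
  by exists jg.1; rewrite imset_f.
by exists jg; rewrite jgC.
Qed.

Lemma cMg_blow (C : {set J * K}) :
  connect (adjMg ends2 C) =2 connect (adjMg ends [set jg.1 | jg in C]).
Proof. by move=> x y; apply: eq_connect => a b; apply: adjMg_blow. Qed.

Definition uniqC (C : {set J * K}) :=
  [forall j, [forall g, [forall g', ((j, g) \in C) && ((j, g') \in C) ==> (g == g')]]].

Lemma MSTg_blow (C : {set J * K}) :
  MSTg R ends2 C = uniqC C && MSTg R ends [set jg.1 | jg in C].
Proof.
set C' := [set jg.1 | jg in C].
have subE : (C \subset [set jg | #|ends2 jg| == 2]) = (C' \subset [set j | #|ends j| == 2]).
  apply/subsetP/subsetP => H j.
    by case/imsetP => jg jgC ->; have := H _ jgC; rewrite !inE.
  by move=> jC; have := H j.1 (imset_f _ jC); rewrite !inE.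
have conE : [forall x in R, [forall y in R, connect (adjMg ends2 C) x y]] =
            [forall x in R, [forall y in R, connect (adjMg ends C') x y]].
  apply: eq_forallb => x; congr (_ ==> _); apply: eq_forallb => y.
  by rewrite cMg_blow.
rewrite /MSTg subE conE.
case: (boolP (C' \subset _)) => sub2 /=; last by rewrite andbF.
case: (boolP [forall x in R, _]) => cc /=; last by rewrite andbF.
apply/idP/andP => [ac|[uq ac]].
  have uq : uniqC C.
    apply/forallP => j; apply/forallP => g; apply/forallP => g'.
    apply/implyP => /andP[jg jg']; apply/negPn/negP => ne.
    have /cards2P[u [v [uv ej]]] : #|ends j| == 2.
      by have := subsetP sub2 j (imset_f _ jg); rewrite inE.
    have uj : u \in ends j by rewrite ej !inE eqxx.
    have vj : v \in ends j by rewrite ej !inE eqxx orbT.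
    move/forallP: ac => /(_ (j, g)); rewrite jg /= => /forallP/(_ u).
    rewrite uj /= => /forallP/(_ v); rewrite vj uv /= => /negP; apply.
    apply: connect1; apply/existsP; exists (j, g').
    by rewrite !inE /= xpair_eqE negb_and eq_sym ne orbT jg' uj vj.
  split => //.
  apply/forallP => j; apply/implyP => /imsetP[[j0 g] jgC /= ->].
  move/forallP: ac => /(_ (j0, g)); rewrite jgC /= => /forallP H1.
  apply/forallP => h; apply/implyP => hi; have := H1 h; rewrite hi /= => /forallP H2.
  apply/forallP => h'; apply/implyP => h'i; have := H2 h'; rewrite h'i /=.
  move=> /implyP H3; apply/implyP => ne; apply: contra (H3 ne).
  rewrite cMg_blow; apply: adjMg_mono; apply/subsetP => j1; rewrite !inE.
  case/andP => nj /imsetP[[j2 g2] jg2 /= ej1]; subst j1.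
  apply/imsetP; exists (j2, g2) => //.
  by rewrite !inE jg2 andbT xpair_eqE negb_and nj.
apply/forallP => [[j g]]; apply/implyP => jgC.
have jC' : j \in [set jg.1 | jg in C] by apply/imsetP; exists (j, g).
move/forallP: ac => /(_ j); rewrite jC' /= => /forallP H1.
apply/forallP => h; apply/implyP => hi; have := H1 h; rewrite hi /= => /forallP H2.
apply/forallP => h'; apply/implyP => h'i; have := H2 h'; rewrite h'i /=.
move=> /implyP H3; apply/implyP => ne; apply: contra (H3 ne).
rewrite cMg_blow; apply: adjMg_mono; apply/subsetP => j1; rewrite !inE.
case/imsetP => [[j2 g2]]; rewrite !inE => /andP[ne2 jg2] /= ->.
rewrite andbC; apply/andP; split; first by apply/imsetP; exists (j2, g2).
apply: contra ne2 => /eqP ej; subst j2.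
have := forallP (forallP (forallP uq j) g) g2; rewrite jgC jg2 /= => /eqP->.
by rewrite eqxx.
Qed.
End Blowup.

Section BlowCount.
Variables (V J K : finType) (R : {set V}) (ends : J -> {set V}) (w : J -> bool -> nat).

Definition setOf (f : {ffun J -> {set K}}) : {set J * K} := [set jg | jg.2 \in f jg.1].
Definition toF (C : {set J * K}) : {ffun J -> {set K}} := [ffun j => [set g | (j, g) \in C]].

Lemma setOfK : cancel toF setOf.
Proof. by move=> C; apply/setP => [[j g]]; rewrite !inE ffunE inE. Qed.
Lemma toFK : cancel setOf toF.
Proof. by move=> f; apply/ffunP => j; apply/setP => g; rewrite ffunE !inE. Qed.

Lemma uniq_setOf f : uniqC (setOf f) = [forall j, #|f j| <= 1].
Proof.
apply/forallP/forallP => H j.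
  apply/card_le1_eqP => g g' gi g'i.
  have := forallP (forallP (H j) g) g'; rewrite !inE /= gi g'i /=.
  by move/eqP.
apply/forallP => g; apply/forallP => g'; apply/implyP; rewrite !inE /=.
by case/andP => gi g'i; apply/eqP; apply: (card_le1_eqP (H j)).
Qed.

Lemma supp_setOf f : [set jg.1 | jg in setOf f] = [set j | f j != set0].
Proof.
apply/setP => j; rewrite inE; apply/imsetP/set0Pn => [[[j0 g]]|[g gi]].
  by rewrite inE /= => gi ->; exists g.
by exists (j, g); rewrite ?inE.
Qed.

Lemma sum_singletons (F : {set K} -> nat) :
  \sum_(A : {set K}) ((#|A| == 1) : nat) * F A = \sum_(g : K) F [set g].
Proof.
rewrite (eq_bigr (fun A => \sum_(g : K) ((A == [set g]) : nat) * F A)); last first.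
  move=> A _; rewrite -big_distrl /=; congr (_ * _).
  case: (@cards1P _ A) => [[a ->]|nA].
    rewrite (bigD1 a) //= eqxx big1 // => g ga.
    by case: eqP => // /set1_inj ag; rewrite ag eqxx in ga.
  rewrite big1 // => g _; case: eqP => // eA; case: nA; by exists g.
rewrite exchange_big /=; apply: eq_bigr => g _.
rewrite (bigD1 [set g]) //= eqxx mul1n big1 ?addn0 // => A nA.
by rewrite (negbTE nA).
Qed.

Lemma Gtrue j :
  \sum_(A : {set K}) ((#|A| <= 1) && ((A != set0) == true) : nat) *
     \prod_(g : K) w j (g \in A) = #|K| * (w j true * w j false ^ #|K|.-1).
Proof.
rewrite (eq_bigr (fun A : {set K} => ((#|A| == 1) : nat) * \prod_(g : K) w j (g \in A))); last first.
  move=> A _; congr (_ * _); rewrite eqb_id -card_gt0.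
  by case: #|A| => [|[|n]].
rewrite sum_singletons -sum_nat_const; apply: eq_bigr => g _.
rewrite (bigD1 g) //= inE eqxx; congr (_ * _).
rewrite (eq_bigr (fun _ => w j false)); last by move=> g' ng; rewrite inE (negbTE ng).
by rewrite prod_nat_const cardC1.
Qed.

Lemma Gfalse j :
  \sum_(A : {set K}) ((#|A| <= 1) && ((A != set0) == false) : nat) *
     \prod_(g : K) w j (g \in A) = w j false ^ #|K|.
Proof.
rewrite (bigD1 set0) //= cards0 eqxx /= mul1n [X in _ + X]big1 ?addn0; last first.
  by move=> A nA; rewrite nA andbF.
rewrite (eq_bigr (fun _ => w j false)); last by move=> g _; rewrite inE.
by rewrite prod_nat_const.
Qed.

Lemma blow_count :
  \sum_(C : {set J * K}) MSTg R (fun jg : J * K => ends jg.1) C *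
      \prod_(jg : J * K) w jg.1 (jg \in C)
  = \sum_(C' : {set J}) MSTg R ends C' *
      \prod_j (if j \in C' then #|K| * (w j true * w j false ^ #|K|.-1)
               else w j false ^ #|K|).
Proof.
pose F (C' : {set J}) j (A : {set K}) :=
  ((#|A| <= 1) && ((A != set0) == (j \in C')) : nat) * \prod_(g : K) w j (g \in A).
have E : forall (C' : {set J}) (j : J), (if j \in C' then #|K| * (w j true * w j false ^ #|K|.-1)
               else w j false ^ #|K|) = \sum_A F C' j A.
  by move=> C' j; rewrite /F; case: (j \in C'); [rewrite Gtrue | rewrite Gfalse].
rewrite (eq_bigr (fun C' => MSTg R ends C' * \sum_(f : {ffun J -> {set K}}) \prod_j F C' j (f j)));
  last by move=> C' _; rewrite -bigA_distr_bigA /=; congr (_ * _); apply: eq_bigr => j _; exact: E.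
rewrite (reindex setOf) /=; last by apply: onW_bij; exists toF; [apply: toFK | apply: setOfK].
have -> : \sum_(C' : {set J}) MSTg R ends C' *
    \sum_(f : {ffun J -> {set K}}) \prod_j F C' j (f j) =
  \sum_(C' : {set J}) \sum_(f : {ffun J -> {set K}}) MSTg R ends C' * \prod_j F C' j (f j).
  by apply: eq_bigr => C' _; rewrite big_distrr.
rewrite exchange_big /=; apply: eq_bigr => f _.
rewrite MSTg_blow uniq_setOf supp_setOf.
rewrite (eq_bigr (fun jg => w jg.1 (jg.2 \in f jg.1))); last first.
  by move=> [j g] _; rewrite inE.
rewrite -(pair_bigA _ (fun j g => w j (g \in f j))) /=.
rewrite (bigD1 [set j | f j != set0]) //= [X in _ + X]big1 ?addn0; last first.
  move=> C' nC'; rewrite /F big_split /= prod_bool.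
  case: (boolP [forall i, _]) => [/forallP H|]; last by rewrite !mul0n muln0.
  case/eqP: nC'; apply/setP => j; rewrite inE.
  by have /andP[_ /eqP] := H j.
rewrite /F big_split /= prod_bool.
have -> : [forall i, (#|f i| <= 1) && ((f i != set0) == (i \in [set j | f j != set0]))]
   = [forall j, #|f j| <= 1].
  by apply: eq_forallb => j; rewrite inE eqxx andbT.
by rewrite mulnA; congr (_ * _); case: [forall _, _]; case: (MSTg _ _ _).
Qed.
End BlowCount.

Import GRing.Theory.

Definition HR (X : graph) (R : {set vtx X}) (p n : nat) (v : vtx X) : {set Gam p n} :=
  if v \in R then [set: Gam p n] else [set 0%R].

Section Layer.
Variable X : graph.
Variable R : {set vtx X}.
Variables p n : nat.
Local Notation XN := (trivial_layer R p n).
Local Notation Gm := (Gam p n).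

Definition phiN (g : Gm) (v : vtx X) : vtx XN :=
  exist _ (v, coset (HR R p n v) g) (coset_ex (HR R p n) v g).

Lemma orgN (d : drt X) (g : Gm) : @org XN (d, g) = phiN g (org d).
Proof. by []. Qed.

Lemma revN (d : drt X) (g : Gm) : @Defs.rev XN (d, g) = (Defs.rev d, g).
Proof. by rewrite /= /lrev /= addr0. Qed.

Lemma tgtN (d : drt X) (g : Gm) : @tgt XN (d, g) = phiN g (tgt d).
Proof. by rewrite /tgt revN orgN. Qed.

Lemma phiN_inj g : injective (phiN g).
Proof. by move=> v w /(congr1 val) [->]. Qed.

Lemma phiN_fst g v : (val (phiN g v)).1 = v.
Proof. by []. Qed.

Lemma phiN_R g v : v \in R -> phiN g v = phiN 0%R v.
Proof.
move=> vR; apply: val_inj => /=; congr (_, _).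
by apply/setP => h; rewrite /coset /HR vR !inE.
Qed.

Lemma phiN_nR g g' v : v \notin R -> phiN g v = phiN g' v -> g = g'.
Proof.
move=> vR /(congr1 val) [] /setP /(_ g); rewrite /coset /HR (negbTE vR) !inE.
by rewrite subrr eqxx => /esym; rewrite subr_eq0 => /eqP.
Qed.

Lemma phiN_surj (x : vtx XN) : exists g, x = phiN g (val x).1.
Proof.
case: x => [[v c] pf]; case/existsP: (pf) => g /eqP /= ec.
by exists g; apply: val_inj => /=; rewrite ec.
Qed.

Lemma invN : involutive (@Defs.rev X) -> involutive (@Defs.rev XN).
Proof. move=> Hinv; case=> d g; rewrite /= /lrev /= !addr0; congr (_, _); exact: Hinv. Qed.

End Layer.

Section LayerSeg.
Variable X : graph.
Hypothesis Hinv : involutive (@Defs.rev X).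
Variable R : {set vtx X}.
Variables p n : nat.
Variable I : finType.
Variable S : I -> {set drt X}.
Hypothesis Hrc : forall i, rev_closed (S i).
Hypothesis Hcover : forall d, exists i, d \in S i.
Hypothesis Hdisj : forall i j d, d \in S i -> d \in S j -> i = j.
Hypothesis Hpriv : forall i d, org d \notin R -> org d \in verts (S i) -> d \in S i.
Hypothesis Hhub : forall i, 0 < #|hubs R S i| <= 2.
Hypothesis Hcov : forall v, v \notin R -> exists i, v \in verts (S i).

Local Notation XN := (trivial_layer R p n).
Local Notation Gm := (Gam p n).

Definition SN (ig : I * Gm) : {set drt XN} :=
  [set dg : drt X * Gm | (dg.1 \in S ig.1) && (dg.2 == ig.2)].
Definition RN : {set vtx XN} := [set x : vtx XN | (val x).1 \in R].

Lemma inSN d g i g' : ((d, g) \in SN (i, g')) = (d \in S i) && (g == g').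
Proof. by rewrite inE. Qed.

Lemma vertsN i g : verts (SN (i, g)) = phiN R g @: verts (S i).
Proof.
apply/setP => x; apply/imsetP/imsetP => [[[d g'] dgS ->]|[v /imsetP[d di ->] ->]].
  rewrite inSN in dgS; case/andP: dgS => di /eqP eg.
  by subst g'; exists (org d) => //; apply: imset_f.
by exists (d, g); rewrite ?inSN ?di ?eqxx.
Qed.

Lemma RNphi g v : (phiN R g v \in RN) = (v \in R).
Proof. by rewrite inE. Qed.

Lemma hubsN i g : hubs RN SN (i, g) = phiN R g @: hubs R S i.
Proof.
apply/setP => x; rewrite (hubsE RN SN) vertsN.
apply/andP/imsetP => [[/imsetP[v vi ->] vR]|[v vh ->]].
  by exists v => //; rewrite (hubsE R S) vi -(RNphi g).
by rewrite (hubsE R S) in vh; case/andP: vh => vi vR; rewrite imset_f // RNphi.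
Qed.

Lemma hubsN0 ig : hubs RN SN ig = phiN R 0%R @: hubs R S ig.1.
Proof.
case: ig => i g; rewrite hubsN; apply: eq_in_imset => v vh /=.
by apply: phiN_R; rewrite (hubsE R S) in vh; case/andP: vh.
Qed.

Lemma RN0 : RN = phiN R 0%R @: R.
Proof.
apply/setP => x; have [g ->] := phiN_surj x; rewrite RNphi.
apply/idP/imsetP => [vR|[w wR /(congr1 (fun y => (val y).1)) /= ->]] //.
by exists (val x).1 => //; apply: phiN_R.
Qed.

Lemma HrcN ig : rev_closed (SN ig).
Proof.
case: ig => i g; apply/rev_closedP; case=> d g'; rewrite revN !inSN /=.
by case/andP => di ->; rewrite (rev_closedP _ (Hrc i)).
Qed.

Lemma HcoverN (dg : drt XN) : exists ig, dg \in SN ig.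
Proof. case: dg => d g; have [i di] := Hcover d; by exists (i, g); rewrite inSN di eqxx. Qed.

Lemma HdisjN ig jg dg : dg \in SN ig -> dg \in SN jg -> ig = jg.
Proof.
case: ig jg dg => i g [j g'] [d h]; rewrite !inSN => /andP[di /eqP <-] /andP[dj /eqP <-].
by rewrite (Hdisj di dj).
Qed.

Lemma HprivN ig (dg : drt XN) : org dg \notin RN -> org dg \in verts (SN ig) -> dg \in SN ig.
Proof.
case: ig dg => i g [d h]; rewrite orgN RNphi vertsN => dR /imsetP[v vi e].
have ev : org d = v by move/(congr1 (fun y => (val y).1)): e.
subst v; have eg := phiN_nR dR e.
by rewrite inSN eg eqxx andbT; apply: Hpriv.
Qed.

Lemma HhubN ig : 0 < #|hubs RN SN ig| <= 2.
Proof. by case: ig => i g; rewrite hubsN card_imset //; apply: phiN_inj. Qed.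

Lemma HcovN (x : vtx XN) : x \notin RN -> exists ig, x \in verts (SN ig).
Proof.
have [g ->] := phiN_surj x; rewrite RNphi => vR.
have [i vi] := Hcov vR; exists (i, g); rewrite vertsN; exact: imset_f.
Qed.

End LayerSeg.

Lemma exists_imset (A B : finType) (f : A -> B) (D : {set A}) (P : B -> bool) :
  [exists x in f @: D, P x] = [exists x in D, P (f x)].
Proof.
apply/existsP/existsP => [[x /andP[/imsetP[y yD ->] Py]]|[x /andP[xD Px]]].
  by exists y; rewrite yD.
by exists (f x); rewrite imset_f.
Qed.

Section Copy.
Variable X : graph.
Hypothesis Hinv : involutive (@Defs.rev X).
Variable R : {set vtx X}.
Variables p n : nat.
Variable I : finType.
Variable S : I -> {set drt X}.
Local Notation XN := (trivial_layer R p n).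
Local Notation Gm := (Gam p n).
Variable g : Gm.

Definition psi (d : drt X) : drt XN := (d, g).
Local Notation phi := (phiN R g).

Lemma psi_inj : injective psi.
Proof. by move=> d e [->]. Qed.

Lemma mem_psi (U : {set drt X}) d : (psi d \in psi @: U) = (d \in U).
Proof. exact: mem_imset psi_inj. Qed.

Lemma adjN (U : {set drt X}) x y : adj (psi @: U) (phi x) (phi y) = adj U x y.
Proof.
apply/adjP/adjP => [[dg /imsetP[d dU ->] [od td]]|[d dU [od td]]].
  exists d => //; split.
    by apply: (@phiN_inj _ R p n g); rewrite -od.
  by apply: (@phiN_inj _ R p n g); rewrite -td /psi tgtN.
by exists (psi d); rewrite ?imset_f // /psi tgtN orgN od td.
Qed.

Lemma adjN_cod (U : {set drt X}) x y' : adj (psi @: U) (phi x) y' -> exists y, y' = phi y.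
Proof.
by case/adjP => dg /imsetP[d dU ->] [_ <-]; exists (tgt d); rewrite /psi tgtN.
Qed.

Lemma connectN (U : {set drt X}) x y :
  connect (adj (psi @: U)) (phi x) (phi y) = connect (adj U) x y.
Proof.
apply: connect_inj; [exact: phiN_inj | exact: adjN_cod | exact: adjN].
Qed.

Lemma rcN (U : {set drt X}) : rev_closed (psi @: U) = rev_closed U.
Proof.
apply/rev_closedP/rev_closedP => H d.
  by move=> dU; have := H _ (imset_f psi dU); rewrite /psi revN -/(psi _) mem_psi.
by case/imsetP => e eU ->; rewrite /psi revN -/(psi _) mem_psi; apply: H.
Qed.

Lemma forestN (U : {set drt X}) : forest (psi @: U) = forest U.
Proof.
rewrite /forest rcN; congr (_ && _); rewrite forall_imset; apply: eq_forallb => d.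
congr (_ ==> _); congr (~~ _).
have -> : psi @: U :\: [set psi d; Defs.rev (psi d)] = psi @: (U :\: [set d; Defs.rev d]).
  rewrite /psi revN -!/(psi _); apply/setP => dg; apply/idP/idP.
    case/setDP => /imsetP[e eU ->]; rewrite !inE !(inj_eq psi_inj) => ne.
    by rewrite imset_f // !inE eU andbT.
  case/imsetP => e; rewrite !inE => /andP[ne eU] ->.
  by rewrite !(inj_eq psi_inj) ne imset_f.
by rewrite /psi tgtN orgN connectN.
Qed.

End Copy.

Section CopySeg.
Variable X : graph.
Hypothesis Hinv : involutive (@Defs.rev X).
Variable R : {set vtx X}.
Variables p n : nat.
Variable I : finType.
Variable S : I -> {set drt X}.
Local Notation XN := (trivial_layer R p n).
Local Notation Gm := (Gam p n).
Variable g : Gm.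
Local Notation psg := (psi R g).

Lemma okN i (U : {set drt X}) :
  okseg (RN R p n) (SN R S) (i, g) (psg @: U) = okseg R S i U.
Proof.
rewrite /okseg forestN vertsN (hubsN R S i g) forall_imset; congr (_ && _).
apply: eq_forallb => x; congr (_ ==> _); rewrite exists_imset; apply: eq_existsb => h.
by rewrite connectN.
Qed.

Lemma connN i (U : {set drt X}) :
  conn (RN R p n) (SN R S) (i, g) (psg @: U) = conn R S i U.
Proof.
rewrite /conn (hubsN R S i g) exists_imset; apply: eq_existsb => h; congr (_ && _).
rewrite exists_imset; apply: eq_existsb => h'; congr (_ && _).
by rewrite (inj_eq (@phiN_inj _ R p n g)) connectN.
Qed.

Lemma wsegN i b : wseg (RN R p n) (SN R S) (i, g) b = wseg R S i b.
Proof.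
rewrite /wseg.
have E : [set U' : {set drt XN} | (U' \subset SN R S (i, g)) &&
      okseg (RN R p n) (SN R S) (i, g) U' && (conn (RN R p n) (SN R S) (i, g) U' == b)]
   = [set psg @: U | U : {set drt X} in [set U : {set drt X} | (U \subset S i) && okseg R S i U &&
           (conn R S i U == b)]].
  apply/setP => U'; rewrite inE; apply/idP/imsetP.
    case/andP => /andP[sub okU'] cU'.
    pose U := [set d | psg d \in U'].
    have eU : U' = psg @: U.
      apply/setP => dg; apply/idP/imsetP => [dgU|[e]]; last by rewrite inE => eU ->.
      have := subsetP sub _ dgU; case: dg dgU => d h dgU; rewrite inSN => /andP[_ /eqP eh].
      by subst h; exists d; rewrite ?inE.
    exists U; last exact: eU.
    rewrite eU okN connN in okU' cU'.
    rewrite inE okU' cU' !andbT; apply/subsetP => d dU.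
    have : psg d \in U' by rewrite inE in dU.
    by move/(subsetP sub); rewrite /psi inSN => /andP[].
  case=> U; rewrite inE => /andP[/andP[sub okU] cU] ->.
  rewrite okN connN okU cU !andbT; apply/subsetP => dg /imsetP[d dU ->].
  by rewrite /psi inSN (subsetP sub _ dU) eqxx.
rewrite E card_imset //; exact: imset_inj (@psi_inj _ R p n g).
Qed.

End CopySeg.

Lemma nconn (V : finType) (M : {set V}) (c : rel V) :
  ~~ [exists h in M, [exists h' in M, (h != h') && c h h']] =
  [forall m in M, [forall m' in M, c m m' ==> (m == m')]].
Proof.
apply/negP/forallP => [H m|H].
  apply/implyP => mM; apply/forallP => m'; apply/implyP => m'M; apply/implyP => cmm.
  apply/negPn/negP => ne; apply: H; apply/existsP; exists m; rewrite mM.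
  by apply/existsP; exists m'; rewrite m'M ne cmm.
case/existsP => h /andP[hM /existsP[h' /andP[h'M /andP[ne cc]]]].
have := H h; rewrite hM /= => /forallP/(_ h'); rewrite h'M cc /= => /eqP e.
by rewrite e eqxx in ne.
Qed.

Lemma wseg_Fcount (G : graph) (R : {set vtx G}) (I : finType) (S : I -> {set drt G}) i :
  wseg R S i false = Fcount (S i) (seg_ram R (S i)).
Proof.
rewrite /wseg /Fcount; apply: eq_card => F; rewrite !inE /rooted_forest.
rewrite /okseg /conn /hubs eqbF_neg nconn.
by case: (F \subset S i); case: (forest F).
Qed.

Section Final.
Variable X : graph.
Hypothesis HinvX : involutive (@Defs.rev X).
Variable R : {set vtx X}.
Variables p n : nat.
Variable I : finType.
Variable S : I -> {set drt X}.
Hypothesis Hrc : forall i, rev_closed (S i).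
Hypothesis Hcover : forall d, exists i, d \in S i.
Hypothesis Hdisj : forall i j d, d \in S i -> d \in S j -> i = j.
Hypothesis Hpriv : forall i d, org d \notin R -> org d \in verts (S i) -> d \in S i.
Hypothesis Hhub : forall i, 0 < #|hubs R S i| <= 2.
Hypothesis Hcov : forall v, v \notin R -> exists i, v \in verts (S i).

Local Notation N := #|Gam p n|.
Local Notation w := (wseg R S).

Lemma kappaN_formula :
  kappa (trivial_layer R p n) =
  \sum_(C' : {set I}) MSTg R (hubs R S) C' *
      \prod_i (if i \in C' then N * (w i true * w i false ^ N.-1) else w i false ^ N).
Proof.
rewrite (@kappa_formula (trivial_layer R p n) (invN HinvX) (RN R p n) _ (SN R S)
  (HrcN R Hrc) (HcoverN Hcover) (HdisjN Hdisj) (HprivN Hpriv) (HhubN Hhub) (HcovN Hcov)).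
rewrite -(blow_count (Gam p n) R (hubs R S) w).
apply: eq_bigr => C _; congr (_ * _).
  rewrite MST_MSTg.
  have -> : hubs (RN R p n) (SN R S) = (fun ig => phiN R 0%R @: hubs R S ig.1).
    by apply: functional_extensionality => ig; apply: hubsN0.
  rewrite RN0 MSTg_inj //; exact: phiN_inj.
by apply: eq_bigr => [[i g]] _; rewrite wsegN.
Qed.

Lemma main_identity (l : nat) : #|R| = l -> 0 < N ->
  kappa (trivial_layer R p n) =
  kappa X * N ^ (l - 1) * \prod_i w i false ^ N.-1.
Proof.
move=> cR N0.
rewrite kappaN_formula (kappa_formula HinvX Hrc Hcover Hdisj Hpriv Hhub Hcov).
rewrite mulnAC big_distrl /= big_distrl /=; apply: eq_bigr => C _.
rewrite MST_MSTg.
case: (boolP (MSTg R (hubs R S) C)) => HM; last by rewrite !mul0n.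
have cC : #|C| = l - 1.
  by rewrite -cR; apply: (MSTg_card _ HM) => i; apply: subsetIr.
rewrite !mul1n.
rewrite (eq_bigr (fun i => (if i \in C then N else 1) * (w i (i \in C) * w i false ^ N.-1)));
  last first.
  move=> i _; case: (i \in C); first by rewrite mulnA.
  by rewrite mul1n -expnS (prednK N0).
rewrite !big_split /= -big_mkcond /= prod_nat_const cC.
by rewrite mulnC.
Qed.

End Final.

Theorem theorem5p12 (X : graph) (R : {set vtx X}) (p n l k k' : nat)
    (S : 'I_k -> {set drt X}) :
  prime p ->
  is_graph X ->
  connectedb [set: drt X] ->
  [forall v, ~~ tail R v] ->
  #|R| = l ->
  (forall m : nat, connectedb [set: drt (trivial_layer R p m)]) ->
  segment_decomposition R S ->
  k' <= k ->
  (forall i : 'I_k, (i < k') = (#|seg_ram R (S i)| == 2)) ->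
  kappa (trivial_layer R p n) =
    kappa X * p ^ (n * (l - 1)) *
    \prod_(i < k) Fcount (S i) (seg_ram R (S i)) ^ (p ^ n - 1).
Proof.
move=> pp [HinvX _] connX _ cR connL [[H1 H2 H3 H4] [_ H5]] _ _.
have Hrc i : rev_closed (S i) by case/andP: (H1 i).
have Hdisj i j d : d \in S i -> d \in S j -> i = j.
  move=> di dj; case: (eqVneq i j) => // ne.
  by rewrite (disjointFr (H2 _ _ ne) di) in dj.
have Hpriv i d : org d \notin R -> org d \in verts (S i) -> d \in S i.
  move=> dR dv; have [j dj] := H3 d; case: (eqVneq i j) => [-> //|ne].
  by have := H4 _ _ _ ne dR dv; rewrite (in_verts dj).
have Hhub i : 0 < #|hubs R S i| <= 2 by rewrite /hubs; case/orP: (H5 i) => /eqP->.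
have p1 : 1 < p by apply: prime_gt1.
have Hcov v : v \notin R -> exists i, v \in verts (S i).
  move=> vR; have := connL 1.
  move/forallP => /(_ (phiN R (0%R : Gam p 1) v)) /forallP /(_ (phiN R (inord 1 : Gam p 1) v)).
  case/connectP => [[|z q]] /= pth e.
    have := phiN_nR vR (esym e) => /(congr1 val).
    by rewrite /= inordK //= expn1 prednK ?(ltnW p1).
  case/andP: pth => /adjP[[d h] _ [od _]] _.
  rewrite orgN in od; have od' : org d = v by move/(congr1 (fun y => (val y).1)): od.
  by have [i di] := H3 d; exists i; rewrite -od' in_verts.
have N0 : 0 < #|Gam p n| by rewrite card_ord.
rewrite (main_identity HinvX Hrc H3 Hdisj Hpriv Hhub Hcov cR N0).
rewrite card_ord prednK ?expn_gt0 ?prime_gt0 // -expnM ?subn1.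
rewrite ?subn1; congr (_ * _); apply: eq_bigr => i _; by rewrite wseg_Fcount.
Qed.
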